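(* Let $\mathcal{A}$ be a resolver-trim history-deterministic generalised Büchi automaton with $n_{\mathcal{A}}$ states. If there exists a deterministic Büchi automaton $\mathcal{B}$ with $n_{\mathcal{B}}$ states such that $\mathcal{L}(\mathcal{B})=\mathcal{L}(\mathcal{A})$, then $\mathcal{A}$ can be recoloured to obtain a resolver-trim history-deterministic generalised Büchi automaton recognising $\mathcal{L}(\mathcal{A})$, with $n_{\mathcal{A}}$ states and using at most $n_{\mathcal{A}}n_{\mathcal{B}}$ output colours.
   Context: An automaton is a tuple $(Q,\Sigma,q_{\mathrm{init}},\Delta,\Gamma,\mathrm{col},W)$ with finite state set, finite input alphabet $\Sigma$, initial state, transitions $\Delta\subseteq Q\times\Sigma\times Q$, output alphabet $\Gamma$, labelling $\mathrm{col}:\Delta\to\Gamma$, acceptance condition $W\subseteq\Gamma^\omega$. A run on $w=a_1a_2\cdots$ is a sequence $(q_0,a_1,q_1)(q_1,a_2,q_2)\cdots$ of transitions with $q_0=q_{\mathrm{init}}$, accepting if its label sequence is in $W$; $\mathcal{L}(\mathcal{A})$ is the set of words with an accepting run. A generalised Büchi automaton with finite output colour set $C$ has $\Gamma=2^C$ and $W=\{x : \text{every } c\in C \text{ occurs in infinitely many letters of } x\}$; a Büchi automaton is the case $|C|=1$. Deterministic: for each $(p,a)$ at most one $q$ with $(p,a,q)\in\Delta$. A resolver is a map $\sigma:\Sigma^+\to\Delta$ such that for every $w=a_0a_1\cdots$, the run $\rho_\sigma(w)=\sigma(a_0)\sigma(a_0a_1)\cdots$ is a run on $w$, accepting whenever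 $w\in\mathcal{L}(\mathcal{A})$; history-deterministic means a resolver exists. A history-deterministic automaton is resolver-trim if it has a resolver $\sigma$ such that every state $q$ is visited by some accepting run of the form $\rho_\sigma(w)$. Recolouring a generalised (co)Büchi automaton with $k'$ colours means replacing its colour set and labelling by a colour set of size $k'$ and a new labelling, keeping the same states, initial state and transitions, without changing the recognised language. *)

(* Defs.v *)
From mathcomp Require Import all_boot.
Set Implicit Arguments. Unset Strict Implicit. Unset Printing Implicit Defensive.

(* A generalised Büchi automaton (Q, Sigma, q_init, Delta, 2^C, col, W_C).
   The labelling is given as a total function on Q*Sigma*Q; only its values
   on transitions in Delta matter. *)
Record GBA (Sigma : finType) := {
  st : finType;
  init : st;
  delta : st -> Sigma -> st -> bool;
  Col : finType;
  col : st -> Sigma -> st -> {set Col}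
}.

Arguments st {Sigma} g.
Arguments init {Sigma} g.
Arguments delta {Sigma} g _ _ _.
Arguments Col {Sigma} g.
Arguments col {Sigma} g _ _ _.

Unset Implicit Arguments.

Definition word (Sigma : Type) := nat -> Sigma.

Section Defs.
Context {Sigma : finType}.
Implicit Types (A : GBA Sigma) (w : word Sigma).

Definition is_run A w (t : nat -> st A * Sigma * st A) : Prop :=
  (t 0).1.1 = init A /\
  forall i, [/\ (t i).1.2 = w i, delta A (t i).1.1 (t i).1.2 (t i).2
             & (t i).2 = (t i.+1).1.1].

Definition accepting A (t : nat -> st A * Sigma * st A) : Prop :=
  forall (c : Col A) (N : nat), exists i, N <= i /\
    c \in col A (t i).1.1 (t i).1.2 (t i).2.

Definition lang A w : Prop := exists t, is_run A w t /\ accepting A t.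

Definition deterministic A : Prop :=
  forall p a q1 q2, delta A p a q1 -> delta A p a q2 -> q1 = q2.

Definition buchi A : Prop := #|Col A| = 1.

(* the run induced by a resolver sigma : Sigma^+ -> Delta;
   sigma is applied to the nonempty prefix w_0 ... w_i *)
Definition rho A (sigma : seq Sigma -> st A * Sigma * st A) w :
  nat -> st A * Sigma * st A := fun i => sigma (mkseq w i.+1).

Definition resolver A (sigma : seq Sigma -> st A * Sigma * st A) : Prop :=
  forall w, is_run A w (rho A sigma w) /\ (lang A w -> accepting A (rho A sigma w)).

Definition history_deterministic A : Prop := exists sigma, resolver A sigma.

Definition resolver_trim A : Prop :=
  exists sigma, resolver A sigma /\
    forall q : st A, exists w, accepting A (rho A sigma w) /\
      exists i, (rho A sigma w i).1.1 = q.

Definition recolour A (C' : finType) (col' : st A -> Sigma -> st A -> {set C'})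
  : GBA Sigma :=
  {| st := st A; init := init A; delta := delta A; Col := C'; col := col' |}.

End Defs.

(* Main.v *)
Require Import Defs.
From mathcomp Require Import all_boot.
From mathcomp Require Import zify.
From Stdlib Require Import Classical ClassicalEpsilon Lia.

Set Implicit Arguments. Unset Strict Implicit. Unset Printing Implicit Defensive.

Lemma modS_case m L : 0 < L ->
  m.+1 %% L = if (m %% L).+1 < L then (m %% L).+1 else 0.
Proof.
move=> L0; rewrite {1}(divn_eq m L) -addnS modnMDl.
case: ifP => h; first by rewrite modn_small.
have hl : m %% L < L by rewrite ltn_pmod.
have -> : (m %% L).+1 = L by apply/eqP; rewrite eqn_leq hl leqNgt h.
by rewrite modnn.
Qed.

Lemma pigeon (K : finType) (h : nat -> K) :
  exists x, forall M, exists i, M <= i /\ h i = x.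
Proof.
apply: NNPP => H.
have H1 : forall x, exists M, forall i, M <= i -> h i != x.
  move=> x; apply: NNPP => H2; apply: H; exists x => M.
  apply: NNPP => H3; apply: H2; exists M => i hi; apply/eqP => e.
  by apply: H3; exists i.
suff [M hM] : exists M, forall i, M <= i -> h i \notin enum K.
  by have := hM M (leqnn M); rewrite mem_enum.
elim: (enum K) => [|x s [M hM]]; first by exists 0.
have [M' hM'] := H1 x.
exists (maxn M M') => i hi; rewrite in_cons negb_or.
rewrite geq_max in hi; case/andP: hi => h1 h2.
by rewrite hM' // hM.
Qed.

Section Proof.
Variable Sigma : finType.
Variables A B : GBA Sigma.
Variable c0 : Col B.

Definition PT := ((st A * Sigma * st A) * (st B * st B))%type.
Definition srcP (t : PT) : st A * st B := (t.1.1.1, t.2.1).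
Definition tgtP (t : PT) : st A * st B := (t.1.2, t.2.2).
Definition validP (t : PT) : bool :=
  delta A t.1.1.1 t.1.1.2 t.1.2 && delta B t.2.1 t.1.1.2 t.2.2.
Definition badP (t : PT) : bool := c0 \notin col B t.2.1 t.1.1.2 t.2.2.
Definition colP (t : PT) := col A t.1.1.1 t.1.1.2 t.1.2.

Definition chain (F : nat -> PT) :=
  srcP (F 0) = (init A, init B) /\
  forall n, validP (F n) /\ tgtP (F n) = srcP (F n.+1).

Definition cwalk x (g : nat -> PT) l :=
  [/\ 0 < l, srcP (g 0) = x, tgtP (g l.-1) = x,
      (forall n, n < l -> validP (g n) && badP (g n))
    & (forall n, n.+1 < l -> tgtP (g n) = srcP (g n.+1))].

Definition Loop x c := exists g l, cwalk x g l /\ exists n, n < l /\ c \in colP (g n).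

Definition cx (x : st A * st B) : option (Col A) :=
  match excluded_middle_informative (exists c, ~ Loop x c) with
  | left H => Some (proj1_sig (constructive_indefinite_description _ H))
  | right _ => None
  end.

Lemma cx_some x c : cx x = Some c -> ~ Loop x c.
Proof.
rewrite /cx; case: excluded_middle_informative => [H|H] //.
case=> <-; exact: proj2_sig (constructive_indefinite_description _ H).
Qed.

Lemma cx_none x : cx x = None -> forall c, Loop x c.
Proof.
rewrite /cx; case: excluded_middle_informative => [H|H] // _ c.
apply: NNPP => h; apply: H; by exists c.
Qed.

Definition gcat (g1 : nat -> PT) l1 g2 := fun n => if n < l1 then g1 n else g2 (n - l1).

Lemma cwalk_cat x g1 l1 g2 l2 : cwalk x g1 l1 -> cwalk x g2 l2 ->
  cwalk x (gcat g1 l1 g2) (l1 + l2).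
Proof.
case=> p1 s1 t1 v1 c1 [p2 s2 t2 v2 c2]; split.
- by rewrite addn_gt0 p1.
- by rewrite /gcat p1.
- by rewrite /gcat -(prednK p2) addnS /= ltnNge leq_addr /= addKn.
- move=> n hn; rewrite /gcat; case: ifP => h; first exact: v1.
  apply: v2; move: h hn; rewrite ltnNge => /negbFE h hn.
  by rewrite ltn_subLR // addnC.
- move=> n hn; rewrite /gcat; case: (ltnP n.+1 l1) => h.
  + rewrite (ltnW h); exact: c1.
  + case: (ltnP n l1) => h'.
    * have e : n.+1 = l1 by apply/eqP; rewrite eqn_leq h' h.
      by rewrite e subnn s2 -t1 -e.
    * rewrite subSn //; apply: c2; rewrite -subSn // ltn_subLR //.
Qed.

Lemma all_colours x g l : cwalk x g l -> (forall c, Loop x c) ->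
  exists G L, cwalk x G L /\ forall c, exists n, n < L /\ c \in colP (G n).
Proof.
move=> hw hL.
suff [G [L [hG hc]]] : exists G L, cwalk x G L /\
    forall c, c \in enum (Col A) -> exists n, n < L /\ c \in colP (G n).
  by exists G, L; split => // c; apply: hc; rewrite mem_enum.
elim: (enum (Col A)) => [|c s [G [L [hG hc]]]]; first by exists g, l.
have [g' [l' [hw' [m [hm hcm]]]]] := hL c.
exists (gcat G L g'), (L + l'); split; first exact: cwalk_cat.
move=> d; rewrite in_cons => /orP [/eqP -> | hd].
- exists (L + m); split; first by rewrite ltn_add2l.
  by rewrite /gcat ltnNge leq_addr /= addKn.
- have [n [hn hdn]] := hc d hd; exists n; split; first exact: ltn_addr.
  by rewrite /gcat hn.
Qed.

Lemma periodic f i0 x G L : chain f -> srcP (f i0) = x -> cwalk x G L ->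
  chain (fun n => if n < i0 then f n else G ((n - i0) %% L)).
Proof.
move=> [f0 fc] hx [p s t v c]; split.
- case: ifP => h; first done.
  have e : i0 = 0 by apply/eqP; rewrite -leqn0 leqNgt h.
  by rewrite mod0n s -hx e f0.
- move=> n; split.
  + case: ifP => h; first by case: (fc n).
    by move: (v _ (ltn_pmod (n - i0) p)) => /andP [].
  + case: (ltnP n.+1 i0) => h.
    * by rewrite (ltnW h); apply: (fc n).2.
    * case: (ltnP n i0) => h'.
      - have e : n.+1 = i0 by apply/eqP; rewrite eqn_leq h' h.
        by rewrite -e subnn mod0n s -hx -e; apply: (fc n).2.
      - rewrite subSn // modS_case //.
        case: ifP => hr; first by apply: c.
        have hl : (n - i0) %% L < L by rewrite ltn_pmod.
        have -> : (n - i0) %% L = L.-1.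
          apply/eqP; move: hl hr p; case: L {s t v c} => // L.
          move=> a b _; rewrite ltnS in a; rewrite ltnS in b.
          by rewrite /= eqn_leq a leqNgt b.
        by rewrite t s.
Qed.

Lemma periodic_col f i0 G L c : 0 < L -> (exists m, m < L /\ c \in colP (G m)) ->
  forall N, exists n, N <= n /\
    c \in colP ((fun n => if n < i0 then f n else G ((n - i0) %% L)) n).
Proof.
move=> p [m [hm hc]] N; exists (i0 + (N * L + m)); split.
- apply: leq_trans (leq_addl _ _); apply: leq_trans (leq_addr _ _).
  by rewrite leq_pmulr.
- by rewrite ltnNge leq_addr /= addKn modnMDl modn_small.
Qed.

Hypothesis Hc0 : forall c : Col B, c = c0.
Hypothesis detB : deterministic B.
Hypothesis HL : forall w, lang B w <-> lang A w.

Lemma no_bad_acc F i0 : chain F -> (forall n, i0 <= n -> badP (F n)) ->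
  (forall c N, exists n, N <= n /\ c \in colP (F n)) -> False.
Proof.
move=> [h0 hch] hbad hcol.
pose w' := fun n => (F n).1.1.2.
have hA : lang A w'.
  exists (fun n => (F n).1); split.
  - split; first by have := f_equal fst h0.
    move=> i; have [hv ht] := hch i; move/andP: hv => [hvA _]; split => //.
    by have := f_equal fst ht.
  - move=> c N; have [n [hn hc]] := hcol c N; by exists n.
have [t' [[t0 tr] tacc]] := proj2 (HL w') hA.
have key : forall n, (t' n).1.1 = (F n).2.1.
  elim=> [|n IH]; first by rewrite t0; have := f_equal snd h0.
  have [e1 e2 e3] := tr n; have [hv ht] := hch n; move/andP: hv => [_ hvB].
  rewrite -e3; apply: (detB e2); rewrite e1 IH /w'.
  have := f_equal snd ht; rewrite /tgtP /srcP /= => <-; exact: hvB.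
have [n [hn hc]] := tacc c0 i0.
have := hbad n hn; rewrite /badP.
have [e1 e2 e3] := tr n.
have := f_equal snd (hch n).2; rewrite /tgtP /srcP /= => e4.
have -> : (F n).1.1.2 = (t' n).1.2 by rewrite e1.
by rewrite e4 -(key n) -(key n.+1) -e3 hc.
Qed.

Fixpoint bseq (w : word Sigma) n : st B :=
  match n with
  | 0 => init B
  | n'.+1 => odflt (bseq w n') [pick p' | delta B (bseq w n') (w n') p']
  end.

Lemma bseq_agree w w'' tb i : is_run B w'' tb -> (forall n, n < i -> w'' n = w n) ->
  forall n, n <= i -> (tb n).1.1 = bseq w n.
Proof.
move=> [t0 tr] hw; elim=> [|n IH] hn; first by rewrite t0.
have [e1 e2 e3] := tr n.
rewrite -e3 /=; rewrite IH ?(ltnW hn) // e1 hw // in e2.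
case: pickP => [p' hp|hnone]; last by have := hnone (tb n).2; rewrite e2.
by apply: (detB e2).
Qed.

Hypothesis Htrim : forall q : st A, exists w0 t0 j,
  is_run A w0 t0 /\ accepting A t0 /\ (t0 j).1.1 = q.

Lemma Brun w t : is_run A w t -> is_run B w (fun n => (bseq w n, w n, bseq w n.+1)).
Proof.
move=> [ti tr].
have ext : forall i, exists w'' tb, is_run B w'' tb /\ forall n, n < i -> w'' n = w n.
  move=> i; have [w0 [t0 [j [[t00 tr0] [acc0 hq]]]]] := Htrim (t i).1.1.
  pose w'' := fun n => if n < i then w n else w0 (n - i + j).
  pose t'' := fun n => if n < i then t n else t0 (n - i + j).
  have hl : lang A w''.
    exists t''; split; first split.
    - rewrite /t''; case: ifP => h //; have e : i = 0 by apply/eqP; rewrite -leqn0 leqNgt h.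
      by rewrite e in hq; rewrite e sub0n add0n hq.
    - move=> n; rewrite /t'' /w''; case: (ltnP n.+1 i) => h.
      + rewrite (ltnW h); have [a b c] := tr n; by split.
      + case: (ltnP n i) => h'.
        * have e : n.+1 = i by apply/eqP; rewrite eqn_leq h' h.
          have [a b c] := tr n; split => //; rewrite e subnn add0n hq -e; exact: c.
        * have [a b c] := tr0 (n - i + j); split => //.
          by rewrite subSn // addSn.
    - move=> c N; have [m [hm hc]] := acc0 c (N + j).
      exists (m - j + i); split.
      + lia.
      + rewrite /t'' ltnNge leq_addl /= addnK subnK //.
        exact: leq_trans (leq_addl _ _) hm.
  have [tb [hb _]] := proj2 (HL w'') hl.
  exists w'', tb; split => // n hn; by rewrite /w'' hn.
split; first done.
move=> n; split => //.
have [w'' [tb [hb hw]]] := ext n.+1.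
have k1 := bseq_agree hb hw (leqnn n.+1).
have k0 := bseq_agree hb hw (leqnSn n).
have [e1 e2 e3] := hb.2 n.
by rewrite -k0 -k1 -e3 -(hw n (ltnSn n)) -e1.
Qed.

Lemma main w t : is_run A w t ->
  (forall x c, cx x = Some c -> forall N, exists i, N <= i /\
     c \in col A (t i).1.1 (t i).1.2 (t i).2) -> lang B w.
Proof.
move=> hr hcol; have hb := Brun hr.
exists (fun n => (bseq w n, w n, bseq w n.+1)); split => //.
move=> c N; apply: NNPP => hne.
have hbadN : forall i, N <= i -> c0 \notin col B (bseq w i) (w i) (bseq w i.+1).
  move=> i hi; apply/negP => hc; apply: hne; exists i; split => //.
  by rewrite (Hc0 c).
pose f := fun i => (t i, (bseq w i, bseq w i.+1)) : PT.
have hchain : chain f.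
  split; first by rewrite /f /srcP /= hr.1.
  move=> n; have [a b c'] := hr.2 n; split.
  - by rewrite /validP /f /= b a; have [_ ? _] := hb.2 n.
  - by rewrite /tgtP /srcP /f /= c'.
have hbad : forall n, N <= n -> badP (f n).
  by move=> n hn; have [e _ _] := hr.2 n; rewrite /badP /f /= e hbadN.
have seg : forall x i0 i2, N <= i0 -> i0 < i2 -> srcP (f i0) = x -> srcP (f i2) = x ->
    cwalk x (fun n => f (i0 + n)) (i2 - i0).
  move=> x i0 i2 h0 h02 s0 s2; split.
  - by rewrite subn_gt0.
  - by rewrite addn0.
  - rewrite -s2; have -> : i2 = (i0 + (i2 - i0).-1).+1.
      by rewrite -addnS prednK ?subn_gt0 // subnKC // ltnW.
    rewrite subSn; last by rewrite leq_addr.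
    by rewrite addKn; apply: (hchain.2 _).2.
  - move=> n hn; rewrite (hchain.2 _).1 hbad //; exact: leq_trans (leq_addr _ _).
  - by move=> n _; rewrite addnS; apply: (hchain.2 _).2.
have [x hx] := pigeon (fun i => srcP (f i)).
have [i0 [hi0 sx0]] := hx N.
have [i1 [hi1 sx1]] := hx i0.+1.
case e : (cx x) => [c'|].
- apply: (cx_some e).
  have [j [hj hcj]] := hcol x c' e i0.
  have [i2 [hi2 sx2]] := hx j.+1.
  exists (fun n => f (i0 + n)), (i2 - i0); split.
    apply: seg => //; exact: leq_ltn_trans hj hi2.
  exists (j - i0); split; first by rewrite ltn_sub2r // (leq_ltn_trans hj hi2).
  by rewrite subnKC.
- have [G [L [hG hGc]]] := all_colours (seg _ _ _ hi0 hi1 sx0 sx1) (cx_none e).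
  have hp := periodic hchain sx0 hG.
  apply: (no_bad_acc hp (i0 := i0)).
  + move=> n hn; rewrite ltnNge hn /=.
    case: hG => p _ _ v _; by move: (v _ (ltn_pmod (n - i0) p)) => /andP [].
  + move=> c' N'; apply: periodic_col; first by case: hG.
    exact: hGc.
Qed.

End Proof.

Theorem lemma42 (Sigma : finType) (A : GBA Sigma) :
  resolver_trim A ->
  forall B : GBA Sigma, deterministic B -> buchi B ->
  (forall w, lang B w <-> lang A w) ->
  exists (k : nat) (col' : st A -> Sigma -> st A -> {set 'I_k}),
    k <= #|st A| * #|st B| /\
    (forall w, lang (recolour A _ col') w <-> lang A w) /\
    history_deterministic (recolour A _ col') /\
    resolver_trim (recolour A _ col').
Proof.
move=> [sg [hres htrim]] B detB hbu HL.
have [c0 Hc0] : exists c0 : Col B, forall c, c = c0.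
  move: hbu; rewrite /buchi cardE.
  have : forall c : Col B, c \in enum (Col B) by move=> c; rewrite mem_enum.
  case: (enum (Col B)) => [|a [|b s]] // hm _; exists a => c.
  by have := hm c; rewrite inE => /eqP.
have Ht : forall q : st A, exists w0 t0 j,
    is_run A w0 t0 /\ accepting A t0 /\ (t0 j).1.1 = q.
  move=> q; have [w0 [acc [i hi]]] := htrim q.
  exists w0, (rho A sg w0), i; split => //; exact: (hres w0).1.
pose k := #|{: st A * st B}|.
pose col' := fun q a q' => [set i : 'I_k | match cx c0 (enum_val i) with
    Some c => c \in col A q a q' | None => true end].
have accE : forall t, accepting (recolour A _ col') t <->
  (forall x c, cx c0 x = Some c -> forall N, exists i, N <= i /\
     c \in col A (t i).1.1 (t i).1.2 (t i).2).
  move=> t; split.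
  - move=> h x c hx N; have [i [hi hc]] := h (enum_rank x) N.
    exists i; split => //; move: hc; by rewrite /col' /= inE enum_rankK hx.
  - move=> h i N; rewrite /col' /=.
    case e : (cx c0 (enum_val i)) => [c|].
    + have [j [hj hc]] := h _ _ e N; exists j; split => //; by rewrite inE e.
    + by exists N; split => //; rewrite inE e.
have accA : forall t, accepting A t -> accepting (recolour A _ col') t.
  move=> t h; apply/accE => x c _ N; exact: h.
have langE : forall w, lang (recolour A _ col') w <-> lang A w.
  move=> w; split.
  - move=> [t [hr ha]]; apply/HL.
    exact: (main Hc0 detB HL Ht hr (proj1 (accE t) ha)).
  - move=> [t [hr ha]]; exists t; split => //; exact: accA.
have hd : resolver (recolour A _ col') sg.
  move=> w; split; first exact: (hres w).1.
  by move=> /langE /(hres w).2; apply: accA.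
exists k, col'; split; first by rewrite /k card_prod.
split => //; split; first by exists sg.
exists sg; split => // q.
have [w [acc [i hi]]] := htrim q.
by exists w; split; [apply: accA | exists i].
Qed.
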